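(* Any satisfiable $d$-dim linear system $S$ with no divisibility constraints has a solution $x\in\mathbb{Z}^d$ such that $\|x\|_1\leq\left(2+d+d\cdot\|S\|\right)^{2d+1}$.
   Context: For a variable $\mathbf{x}$ ranging over $\mathbb{Z}^d$, a $d$-dim linear system without divisibility constraints is a propositional formula (boolean combination) whose atoms are equality constraints $\langle\alpha,\mathbf{x}\rangle=c$ and inequality constraints $\langle\alpha,\mathbf{x}\rangle\geq c$ with $\alpha\in\mathbb{Z}^d$, $c\in\mathbb{Z}$; its solutions are the $x\in\mathbb{Z}^d$ satisfying it. $\|S\|$ is the least $s\in\mathbb{N}$ with $\max\{\max_i|\alpha(i)|,|c|\}\leq s$ for all constraints in $S$. $\|x\|_1=\sum_i|x(i)|$. *)

(* Defs.v *)
From mathcomp Require Import all_boot all_order all_algebra.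
Set Implicit Arguments. Unset Strict Implicit. Unset Printing Implicit Defensive.
Import Order.TTheory GRing.Theory Num.Theory.
Local Open Scope ring_scope.

Definition zvec (d : nat) := {ffun 'I_d -> int}.

Definition dotz (d : nat) (a x : zvec d) : int := \sum_(i < d) a i * x i.

(* Linear systems without divisibility constraints: propositional formulas
   (boolean combinations) over equality and inequality atoms. *)
Inductive lsys (d : nat) : Type :=
  | LEq  of zvec d & int
  | LGe  of zvec d & int
  | LNot of lsys d
  | LAnd of lsys d & lsys d
  | LOr  of lsys d & lsys d.

Fixpoint sat (d : nat) (S : lsys d) (x : zvec d) : bool :=
  match S with
  | LEq a c => dotz a x == c
  | LGe a c => dotz a x >= c
  | LNot S1 => ~~ sat S1 x
  | LAnd S1 S2 => sat S1 x && sat S2 x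
  | LOr S1 S2 => sat S1 x || sat S2 x
  end.

Definition atom_norm (d : nat) (a : zvec d) (c : int) : nat :=
  maxn (\max_(i < d) `|a i|%N) `|c|%N.

Fixpoint lsys_norm (d : nat) (S : lsys d) : nat :=
  match S with
  | LEq a c => atom_norm a c
  | LGe a c => atom_norm a c
  | LNot S1 => lsys_norm S1
  | LAnd S1 S2 => maxn (lsys_norm S1) (lsys_norm S2)
  | LOr S1 S2 => maxn (lsys_norm S1) (lsys_norm S2)
  end.

Definition norm1 (d : nat) (x : zvec d) : nat := \sum_(i < d) `|x i|%N.

(* Main.v *)
Require Import Defs.
From mathcomp Require Import all_boot all_order all_algebra perm.
From mathcomp Require Import zify ring lra.
Import Order.TTheory GRing.Theory Num.Theory.
Set Implicit Arguments. Unset Strict Implicit. Unset Printing Implicit Defensive.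
Local Open Scope ring_scope.

Definition conf (R : numDomainType) (u v : R) : bool :=
  if 0 < v then 0 <= u else if v < 0 then u <= 0 else u == 0.

Section Conf.
Variable R : realDomainType.
Implicit Types u v : R.

Lemma conf0 v : conf 0 v.
Proof. by rewrite /conf lexx eqxx; case: ifP => //; case: ifP. Qed.

Lemma confvv v : conf v v.
Proof. rewrite /conf; case: (ltgtP 0 v) => [/ltW //|/ltW //|//]. Qed.

Lemma confD u1 u2 v : conf u1 v -> conf u2 v -> conf (u1 + u2) v.
Proof.
rewrite /conf; case: ifP => _; first by apply: addr_ge0.
case: ifP => _; last by move=> /eqP -> /eqP ->; rewrite addr0.
move=> h1 h2; rewrite -oppr_ge0 opprD addr_ge0 // oppr_ge0 //.
Qed.

Lemma confZ c u v : 0 <= c -> conf u v -> conf (c * u) v.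
Proof.
move=> c0; rewrite /conf; case: ifP => _; first by apply: mulr_ge0.
case: ifP => _; last by move=> /eqP ->; rewrite mulr0.
by move=> h; rewrite mulr_ge0_le0.
Qed.

Lemma conf_nz u v : conf u v -> u != 0 -> (0 < v) = (0 < u) /\ (v < 0) = (u < 0).
Proof.
rewrite /conf => h nz.
move: h; case: (ltgtP 0 v) => [vp|vn|v0] h.
- split; apply/esym; first by rewrite lt_def nz h.
  by rewrite ltNge h.
- split; apply/esym; first by rewrite ltNge h.
  by rewrite lt_def eq_sym nz.
- by rewrite (negbTE nz) in h.
Qed.

End Conf.

Lemma det_bound n (B : 'M[int]_n) (s : nat) :
  (forall i j, `|B i j| <= s%:Z) -> `|\det B| <= (n`! * s ^ n)%N%:Z.
Proof.
move=> Bs; rewrite /determinant.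
apply: (le_trans (ler_norm_sum _ _ _)).
have -> : (n`! * s ^ n)%N%:Z = \sum_(σ : 'S_n) (s%:Z) ^+ n.
  rewrite sumr_const card_Sn -mulr_natl natz PoszM; congr (_ * _); by rewrite -natz natrX natz.
apply: ler_sum => σ _.
rewrite normrM normrX normrN1 expr1n mul1r normr_prod.
rewrite -[in X in _ <= X](card_ord n) -prodr_const.
apply: ler_prod => i _; rewrite normr_ge0 /=; exact: Bs.
Qed.

Local Notation iQ := (intr : int -> rat).

Lemma row'_col_mx0 n p (y : 'rV[rat]_p) (B : 'M[rat]_(n, p)) j :
  row' (ord0 : 'I_(n.+1)) (col' j (col_mx y B : 'M_(1 + n, p))) = col' j B.
Proof.
apply/matrixP => i k0; rewrite !mxE.
have -> : lift ord0 i = rshift 1 i :> 'I_(1 + n) by apply: val_inj.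
case: splitP => k /= hk; first by move: (ltn_ord k); rewrite -hk.
by congr (B _ _); apply: val_inj; move: hk => /= /eqP; rewrite eqn_add2l => /eqP.
Qed.

Lemma col_mx_top n p (y : 'rV[rat]_p) (B : 'M[rat]_(n, p)) j :
  (col_mx y B : 'M_(1 + n, p)) (ord0 : 'I_n.+1) j = y 0 j.
Proof.
rewrite mxE; case: splitP => k /= hk; first by congr (y _ _); apply: val_inj; case: k hk => [[]].
by move: hk; rewrite add1n.
Qed.

Lemma col_mx_bot n p (y : 'rV[rat]_p) (B : 'M[rat]_(n, p)) k j :
  (col_mx y B : 'M_(1 + n, p)) (lift (ord0 : 'I_n.+1) k) j = B k j.
Proof.
rewrite mxE; case: splitP => k1 /= hk; first by move: (ltn_ord k1); rewrite -hk.
by congr (B _ _); apply: val_inj; move: hk => /= /eqP; rewrite eqn_add2l => /eqP.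
Qed.

Lemma cofactor_vec n (B : 'M[int]_(n, n.+1)) (y : 'rV[rat]_n.+1) (s : nat) :
  row_free (map_mx iQ B) -> y != 0 -> map_mx iQ B *m y^T = 0 ->
  (forall i j, `|B i j| <= s%:Z) ->
  exists r : 'rV[int]_n.+1, exists c : rat,
    [/\ c != 0, map_mx iQ r = c *: y & forall j, `|r 0 j| <= (n`! * s ^ n)%N%:Z].
Proof.
move=> Bfree y0 By Bs.
set BQ := map_mx iQ B.
pose M : 'M[rat]_(n.+1) := col_mx y BQ.
pose rZ : 'rV[int]_n.+1 := \row_j ((-1) ^+ j * \det (col' j B)).
have adjE j : \adj M j 0 = (rZ 0 j)%:~R.
  rewrite !mxE /cofactor /M row'_col_mx0 -map_col' det_map_mx.
  by rewrite rmorphM rmorphXn add0n; congr (_ ^+ _ * _); rewrite /= intrN.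
pose rQ := map_mx iQ rZ.
have MA := mul_mx_adj M.
have hB k : \sum_j BQ k j * rQ 0 j = 0.
  have := congr1 (fun X : 'M[rat]_(n.+1) => X (lift ord0 k) 0) MA.
  rewrite !mxE /= mulr0n => h; rewrite -[X in _ = X]h; apply: eq_bigr => j _.
  by rewrite /M col_mx_bot adjE !mxE.
have hy : \sum_j y 0 j * rQ 0 j = \det M.
  have := congr1 (fun X : 'M[rat]_(n.+1) => X 0 0) MA.
  rewrite !mxE /= mulr1n => h; rewrite -[X in _ = X]h; apply: eq_bigr => j _.
  by rewrite /M col_mx_top adjE !mxE.
have yy : 0 < \sum_j y 0 j * y 0 j.
  have [j yj] : exists j, y 0 j != 0.
    apply/existsP; apply: contraR y0; rewrite negb_exists => /forallP h.
    by apply/eqP/rowP => j; rewrite mxE; apply/eqP; move: (h j); rewrite negbK.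
  rewrite (bigD1 j) //= ltr_pwDl //; first by rewrite lt_def mulf_neq0 // -expr2 sqr_ge0.
  by apply: sumr_ge0 => i _; rewrite -expr2 sqr_ge0.
have detM : \det M != 0.
  apply/negP => /det0P [v v0 vM].
  have [v1 [v2 ev]] : exists (v1 : 'rV[rat]_1) (v2 : 'rV[rat]_n), v = row_mx v1 v2.
    by exists (@lsubmx rat 1 1 n v), (@rsubmx rat 1 1 n v); rewrite (@hsubmxK rat 1 1 n v).
  have {vM} : row_mx v1 v2 *m (col_mx y BQ : 'M_(1 + n, n.+1)) = 0 by rewrite -ev.
  rewrite mul_row_col => vM.
  have h1 : v1 0 0 * (\sum_j y 0 j * y 0 j) = 0.
    have := congr1 (fun X => (X *m y^T) 0 0) vM.
    rewrite mulmxDl -!mulmxA By mulmx0 addr0 mul0mx !mxE big_ord1 => h; rewrite -[RHS]h.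
    by rewrite !mxE; congr (_ * _); apply: eq_bigr => j _; rewrite !mxE.
  have v10 : v1 = 0.
    apply/rowP => k; rewrite ord1 mxE; apply/eqP.
    by move: h1 => /eqP; rewrite mulf_eq0 (gt_eqF yy) orbF.
  move: vM; rewrite v10 mul0mx add0r => /eqP; rewrite mulmx_free_eq0 // => /eqP v20.
  by move: v0; rewrite ev v10 v20 row_mx0 eqxx.
have rQ0 : rQ != 0.
  apply: contra detM => /eqP h; rewrite -hy h big1 // => j _; by rewrite mxE mulr0.
pose K := kermx BQ^T.
have yK : (y <= K)%MS.
  rewrite sub_kermx; have -> : y *m BQ^T = (BQ *m y^T)^T by rewrite trmx_mul trmxK.
  by rewrite By trmx0.
have BrQ : BQ *m rQ^T = 0.
  apply/matrixP => k i; rewrite ord1 !mxE -[RHS](hB k); apply: eq_bigr => j _.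
  by rewrite !mxE.
have rK : (rQ <= K)%MS.
  rewrite sub_kermx; have -> : rQ *m BQ^T = (BQ *m rQ^T)^T by rewrite trmx_mul trmxK.
  by rewrite BrQ trmx0.
have rkK : \rank K = 1%N.
  rewrite mxrank_ker mxrank_tr; move: Bfree; rewrite /row_free => /eqP ->.
  by rewrite subSnn.
have Ky : (K <= y)%MS by rewrite -(mxrank_leqif_sup yK).2 rkK rank_rV y0.
have [D eD] := submxP (submx_trans rK Ky).
exists rZ, (D 0 0); split.
- apply: contra rQ0 => /eqP c0; apply/eqP.
  by rewrite eD [D]mx11_scalar c0 mul_scalar_mx scale0r.
- by rewrite -/rQ eD {1}[D]mx11_scalar mul_scalar_mx.
- move=> j; rewrite mxE normrM normrX normrN1 expr1n mul1r.
  apply: det_bound => a b; rewrite mxE; exact: Bs.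
Qed.

Definition n1 k (y : 'rV[rat]_k) : rat := \sum_j `|y 0 j|.

Lemma n1_ge0 k (y : 'rV[rat]_k) : 0 <= n1 y.
Proof. by apply: sumr_ge0 => j _; exact: normr_ge0. Qed.

Lemma n1_comb k (a b : rat) (u v : 'rV[rat]_k) : 0 <= a -> 0 <= b ->
  n1 (a *: u + b *: v) <= a * n1 u + b * n1 v.
Proof.
move=> a0 b0; rewrite /n1 !mulr_sumr -big_split /=; apply: ler_sum => j _.
rewrite !mxE; apply: (le_trans (ler_normD _ _)).
by rewrite !normrM (ger0_norm a0) (ger0_norm b0).
Qed.

Lemma n1Z k (a : rat) (u : 'rV[rat]_k) : n1 (a *: u) = `|a| * n1 u.
Proof. by rewrite /n1 mulr_sumr; apply: eq_bigr => j _; rewrite mxE normrM. Qed.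

Section Geo.
Variables (n m s : nat) (A : 'M[int]_(m, n.+1)).
Hypothesis As : forall i j, `|A i j| <= s%:Z.
Hypothesis Ae : forall j : 'I_n.+1, exists i, forall j', A i j' = (j == j')%:R.
Variable x0 : 'rV[rat]_n.+1.

Definition cv i (y : 'rV[rat]_n.+1) : rat := \sum_j (A i j)%:~R * y 0 j.

Lemma cvD i y z : cv i (y + z) = cv i y + cv i z.
Proof. by rewrite /cv -big_split; apply: eq_bigr => j _; rewrite mxE mulrDr. Qed.

Lemma cvZ i c y : cv i (c *: y) = c * cv i y.
Proof. by rewrite /cv mulr_sumr; apply: eq_bigr => j _; rewrite mxE mulrCA. Qed.

Lemma cvN i y : cv i (- y) = - cv i y.
Proof. by rewrite -scaleN1r cvZ mulN1r. Qed.

Lemma cvB i y z : cv i (y - z) = cv i y - cv i z.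
Proof. by rewrite cvD cvN. Qed.

Lemma cv0 i : cv i 0 = 0.
Proof. by rewrite -(scale0r 0) cvZ mul0r. Qed.

Definition inC y := forall i, conf (cv i y) (cv i x0).

Lemma inC0 : inC 0.
Proof. by move=> i; rewrite cv0 conf0. Qed.

Lemma inCx0 : inC x0.
Proof. by move=> i; exact: confvv. Qed.

Lemma inC_comb a b y z : 0 <= a -> 0 <= b -> inC y -> inC z -> inC (a *: y + b *: z).
Proof.
move=> a0 b0 hy hz i; rewrite cvD !cvZ; apply: confD; exact: confZ.
Qed.

Lemma inCZ a y : 0 <= a -> inC y -> inC (a *: y).
Proof. by move=> a0 hy i; rewrite cvZ; apply: confZ. Qed.

Definition TZ y : 'M[int]_(m, n.+1) := \matrix_(i, j) (if cv i y == 0 then A i j else 0).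
Definition TQ y := map_mx iQ (TZ y).

Lemma TQ_mulE y w i : (TQ y *m w^T) i 0 = if cv i y == 0 then cv i w else 0.
Proof.
rewrite mxE; case: (boolP (cv i y == 0)) => h.
  by apply: eq_bigr => j _; rewrite !mxE h.
by apply: big1 => j _; rewrite !mxE (negbTE h) mul0r.
Qed.

Lemma TQ_perp y w : TQ y *m w^T = 0 <-> (forall i, cv i y = 0 -> cv i w = 0).
Proof.
split => [h i hi|h].
  by have := congr1 (fun X : 'M[rat]_(m, 1) => X i 0) h; rewrite TQ_mulE hi eqxx mxE.
apply/matrixP => i k; rewrite ord1 TQ_mulE mxE; case: ifP => // /eqP; exact: h.
Qed.

Lemma TQ_ker y w : (w <= kermx (TQ y)^T)%MS <-> (forall i, cv i y = 0 -> cv i w = 0).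
Proof.
rewrite sub_kermx; have -> : w *m (TQ y)^T = (TQ y *m w^T)^T by rewrite trmx_mul trmxK.
rewrite -TQ_perp; split => [/eqP h|->]; last by rewrite trmx0.
by rewrite -[TQ y *m w^T]trmxK h trmx0.
Qed.

Lemma rank_TQ y : y != 0 -> (\rank (TQ y) <= n)%N.
Proof.
move=> y0; have yK : (y <= kermx (TQ y)^T)%MS by apply/TQ_ker.
have := mxrankS yK; rewrite mxrank_ker mxrank_tr rank_rV y0 /=.
by move: (rank_leq_col (TQ y)); lia.
Qed.


Lemma step_sign (u z t : rat) : u != 0 -> 0 < t -> (u * z < 0 -> t <= - u / z) ->
  (0 < u -> 0 <= u + t * z) /\ (u < 0 -> u + t * z <= 0).
Proof.
move=> u0 t0 h; case: (ltgtP z 0) => zs.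
- split => hu; last by nra.
  have : u * z < 0 by nra.
  by move/h; rewrite ler_ndivlMr // => ?; lra.
- split => hu; first by nra.
  have : u * z < 0 by nra.
  by move/h; rewrite ler_pdivlMr // => ?; lra.
- by rewrite zs mulr0 addr0; split => ?; lra.
Qed.

Lemma qpos (u z : rat) : u * z < 0 -> 0 < - u / z.
Proof.
move=> h; have z0 : z != 0 by apply: contraTneq h => ->; rewrite mulr0 ltxx.
have zz : 0 < z * z by rewrite lt_def mulf_neq0 // -expr2 sqr_ge0.
have -> : - u / z = - (u * z) / (z * z) by field.
by apply: divr_gt0 => //; lra.
Qed.

Lemma ratio y w i0 : inC y -> (forall i, cv i y = 0 -> cv i w = 0) ->
  cv i0 y * cv i0 w < 0 ->
  exists t, [/\ 0 < t, inC (y + t *: w) &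
    exists i, cv i y != 0 /\ cv i (y + t *: w) = 0].
Proof.
move=> hy hw P0.
pose q i := - cv i y / cv i w.
case: (@arg_minP _ _ _ i0 (fun i => cv i y * cv i w < 0) q P0) => i1 P1 qmin.
have qp := qpos P1.
exists (q i1); split => //.
- move=> i; rewrite cvD cvZ.
  case: (eqVneq (cv i y) 0) => [hyi|hyi].
    by rewrite hyi (hw _ hyi) mulr0 addr0; exact: conf0.
  have [e1 e2] := conf_nz (hy i) hyi.
  have [s1 s2] := step_sign hyi qp (fun P => qmin i P).
  rewrite /conf e1 e2; case: ifP => hu; first exact: s1.
  case: ifP => hu'; first exact: s2.
  by move: hyi; rewrite neq_lt hu hu'.
- exists i1; split; first by apply: contraTneq P1 => ->; rewrite mul0r ltxx.
  have z0 : cv i1 w != 0 by apply: contraTneq P1 => ->; rewrite mulr0 ltxx.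
  by rewrite cvD cvZ /q divfK // addrN.
Qed.

Lemma cv_unit j : exists i, forall v, cv i v = v 0 j.
Proof.
have [i hi] := Ae j; exists i => v; rewrite /cv (bigD1 j) //= big1 => [|k kj].
  by rewrite hi eqxx mul1r addr0.
by rewrite hi eq_sym (negbTE kj) mul0r.
Qed.

Lemma blocking y w : inC y -> (forall i, cv i y = 0 -> cv i w = 0) -> w != 0 ->
  \sum_j w 0 j * Num.sg (x0 0 j) = 0 -> exists i, cv i y * cv i w < 0.
Proof.
move=> hy hw w0 hs.
have yj j : w 0 j != 0 -> y 0 j != 0.
  have [i hi] := cv_unit j; move=> wj; apply: contra wj => /eqP yj0.
  by rewrite -!hi (hw i) // hi yj0.
have cj j : conf (y 0 j) (x0 0 j) by have [i hi] := cv_unit j; rewrite -!hi; apply: hy.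
have [j hj] : exists j, w 0 j * Num.sg (x0 0 j) < 0.
  case: (boolP [exists j, w 0 j * Num.sg (x0 0 j) < 0]) => [/existsP //|].
  rewrite negb_exists => /forallP hF; exfalso.
  have F0 : forall j, w 0 j * Num.sg (x0 0 j) = 0.
    move=> j; apply: (psumr_eq0P _ hs) => // k _; by rewrite leNgt (hF k).
  have [j wj] : exists j, w 0 j != 0.
    apply/existsP; apply: contraR w0; rewrite negb_exists => /forallP h.
    by apply/eqP/rowP => j; rewrite mxE; apply/eqP; move: (h j); rewrite negbK.
  have [e1 e2] := conf_nz (cj j) (yj j wj).
  have : x0 0 j != 0.
    by move: (yj j wj); rewrite neq_lt -e1 -e2 -neq_lt.
  rewrite -sgr_eq0 => sg0; move: (F0 j) => /eqP; rewrite mulf_eq0 (negbTE wj).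
  by rewrite (negbTE sg0).
have wj : w 0 j != 0 by apply: contraTneq hj => ->; rewrite mul0r ltxx.
have [e1 e2] := conf_nz (cj j) (yj j wj).
have [i hi] := cv_unit j; exists i; rewrite !hi.
move: (yj j wj); rewrite neq_lt => /orP [yn|yp].
  by move: hj; rewrite ltr0_sg ?e2 // => ?; nra.
by move: hj; rewrite gtr0_sg ?e1 // => ?; nra.
Qed.

Lemma grow y w t i : (forall k, cv k y = 0 -> cv k w = 0) -> cv i y != 0 ->
  cv i (y + t *: w) = 0 -> (\rank (TQ y) < \rank (TQ (y + t *: w)))%N.
Proof.
move=> hw yi y1i; apply: rank_ltmx; rewrite ltmxE; apply/andP; split.
  apply/row_subP => k; case: (eqVneq (cv k y) 0) => h.
    have -> : row k (TQ y) = row k (TQ (y + t *: w)).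
      apply/rowP => j; rewrite !mxE h cvD cvZ h (hw _ h) mulr0 addr0 eqxx //.
    exact: row_sub.
  have -> : row k (TQ y) = 0 by apply/rowP => j; rewrite !mxE (negbTE h) mulr0z.
  exact: sub0mx.
apply/negP => sub.
have wi : cv i w != 0.
  apply: contra yi => /eqP wi; move: y1i; by rewrite cvD cvZ wi mulr0 addr0 => ->.
have [D eD] := submxP (submx_trans (row_sub i (TQ (y + t *: w))) sub).
have := congr1 (fun X => (X *m w^T) 0 0) eD.
rewrite -row_mul mxE TQ_mulE y1i eqxx -mulmxA.
have /TQ_perp -> : (forall k, cv k y = 0 -> cv k w = 0) by [].
by rewrite mulmx0 mxE => /eqP; rewrite (negbTE wi).
Qed.

Definition Rb := ((n.+1)`! * s ^ n)%N.

Lemma n1_bound (r : 'rV[int]_n.+1) :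
  (forall j, `|r 0 j| <= (n`! * s ^ n)%N%:Z) -> n1 (map_mx iQ r) <= Rb%:R.
Proof.
move=> hr; rewrite /n1 /Rb.
have -> : ((n.+1)`! * s ^ n)%N%:R = \sum_(j < n.+1) ((n`! * s ^ n)%N%:R : rat).
  by rewrite sumr_const card_ord -[RHS]mulr_natr -natrM factS [in RHS]mulnC mulnA.
apply: ler_sum => j _; rewrite mxE -intr_norm -pmulrn ler_nat; move: (hr j); lia.
Qed.

Lemma zero_case k : exists r : 'rV[int]_n.+1, exists lam : rat,
  [/\ 0 <= lam, inC (map_mx iQ r), inC (0 - lam *: map_mx iQ r),
      n1 (map_mx iQ r) <= Rb%:R & n1 (0 : 'rV[rat]_n.+1) <= 2 ^+ k * lam * n1 (map_mx iQ r)].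
Proof.
exists 0, 0; rewrite map_mx0 scale0r subr0.
have n10 : n1 (0 : 'rV[rat]_n.+1) = 0 by rewrite /n1 big1 // => j _; rewrite mxE normr0.
by rewrite n10 mulr0; split => //; exact: inC0.
Qed.

Lemma key k : forall y, inC y -> (n.+1 - \rank (TQ y) <= k)%N ->
  exists r : 'rV[int]_n.+1, exists lam : rat,
  [/\ 0 <= lam, inC (map_mx iQ r), inC (y - lam *: map_mx iQ r),
      n1 (map_mx iQ r) <= Rb%:R & n1 y <= 2 ^+ k * lam * n1 (map_mx iQ r)].
Proof.
elim: k => [|k IH] y hy hk; (case: (eqVneq y 0) => [->|y0]; first exact: zero_case).
  by move: (rank_TQ y0) hk; lia.
case: (leqP n (\rank (TQ y))) => hr.
-
  have er : \rank (TQ y) = n by apply/eqP; rewrite eqn_leq rank_TQ.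
  pose f := maxrankfun (TQ y).
  pose g := fun i : 'I_n => f (cast_ord (esym er) i).
  pose BZ := rowsub g (TZ y).
  have BQE : map_mx iQ BZ = rowsub g (TQ y) by apply/matrixP => a b; rewrite !mxE.
  have Bfree : row_free (map_mx iQ BZ).
    rewrite BQE /row_free.
    have -> : rowsub g (TQ y) = rowsub (cast_ord (esym er)) (rowsub f (TQ y)).
      by apply/matrixP => a b; rewrite !mxE.
    rewrite rowsub_cast eqmx_cast.
    by move: (maxrowsub_free (TQ y)); rewrite /row_free -/f => /eqP ->; rewrite er.
  have By : map_mx iQ BZ *m y^T = 0.
    have /TQ_perp h0 : forall i, cv i y = 0 -> cv i y = 0 by [].
    apply/matrixP => a b; rewrite BQE ord1.
    have := congr1 (fun X : 'M[rat]_(m, 1) => X (g a) 0) h0; rewrite !mxE => h.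
    by rewrite -[RHS]h; apply: eq_bigr => j _; rewrite !mxE.
  have Bs : forall a b, `|BZ a b| <= s%:Z.
    by move=> a b; rewrite !mxE; case: ifP => _; [exact: As | rewrite normr0].
  have [r [c [c0 rE rb]]] := cofactor_vec Bfree y0 By Bs.
  have hrb := n1_bound rb.
  move: c0; rewrite neq_lt => /orP [cn|cp].
  + exists (- r), (- c)^-1.
    have rE' : map_mx iQ (- r) = (- c) *: y by rewrite map_mxN rE scaleNr.
    have ci : 0 < - c by rewrite oppr_gt0.
    rewrite rE'; split.
    * by rewrite invr_ge0 ltW.
    * by apply: inCZ; [exact: ltW | exact: hy].
    * by rewrite scalerA mulVf ?gt_eqF // scale1r subrr; exact: inC0.
    * by rewrite -rE' map_mxN -scaleN1r n1Z normrN normr1 mul1r.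
    * rewrite n1Z gtr0_norm //.
      have -> : 2 ^+ k.+1 * (- c)^-1 * (- c * n1 y) = 2 ^+ k.+1 * n1 y.
        by field; rewrite lt_eqF.
      by rewrite ler_peMl ?n1_ge0 // exprn_ege1.
  + exists r, c^-1; rewrite rE; split.
    * by rewrite invr_ge0 ltW.
    * by apply: inCZ; [exact: ltW | exact: hy].
    * by rewrite scalerA mulVf ?gt_eqF // scale1r subrr; exact: inC0.
    * by rewrite -rE.
    * rewrite n1Z gtr0_norm //.
      have -> : 2 ^+ k.+1 * c^-1 * (c * n1 y) = 2 ^+ k.+1 * n1 y.
        by field; rewrite gt_eqF.
      by rewrite ler_peMl ?n1_ge0 // exprn_ege1.
-
  pose phi : 'rV[rat]_n.+1 := \row_j Num.sg (x0 0 j).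
  pose Tp := col_mx (TQ y) phi.
  have rTp : (\rank Tp <= n)%N.
    rewrite /Tp -addsmxE; apply: (leq_trans (mxrank_adds_leqif _ _)).
    by move: (rank_leq_row phi); lia.
  pose K := kermx Tp^T.
  have K0 : K != 0.
    rewrite -mxrank_eq0 /K mxrank_ker mxrank_tr; lia.
  have [j0 w0] : exists j, row j K != 0.
    apply/existsP; apply: contraR K0; rewrite negb_exists => /forallP h.
    by apply/eqP/row_matrixP => j; rewrite row0; apply/eqP; move: (h j); rewrite negbK.
  set w := row j0 K in w0.
  have := row_sub j0 K; rewrite -/w /K sub_kermx tr_col_mx mul_mx_row row_mx_eq0.
  case/andP => /eqP wT /eqP wphi.
  have hw : forall i, cv i y = 0 -> cv i w = 0 by apply/TQ_ker; rewrite sub_kermx wT.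
  have hs : \sum_j w 0 j * Num.sg (x0 0 j) = 0.
    have := congr1 (fun X : 'M[rat]_1 => X 0 0) wphi; rewrite !mxE => h.
    by rewrite -[RHS]h; apply: eq_big => // j _; rewrite !mxE.
  have hw' : forall i, cv i y = 0 -> cv i (- w) = 0.
    by move=> i /hw; rewrite cvN => ->; rewrite oppr0.
  have hs' : \sum_j (- w) 0 j * Num.sg (x0 0 j) = 0.
    rewrite (eq_bigr (fun j => - (w 0 j * Num.sg (x0 0 j)))) ?sumrN ?hs ?oppr0 //.
    by move=> j _; rewrite mxE mulNr.
  have w0' : - w != 0 by rewrite oppr_eq0.
  have [i1 b1] := blocking hy hw w0 hs.
  have [i2 b2] := blocking hy hw' w0' hs'.
  have [t1 [t1p hy1 [k1 [k1a k1b]]]] := ratio hy hw b1.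
  have [t2 [t2p hy2 [k2 [k2a k2b]]]] := ratio hy hw' b2.
  set y1 := y + t1 *: w in hy1 k1b.
  set y2 := y + t2 *: - w in hy2 k2b.
  have g1 := grow hw k1a k1b.
  have g2 := grow hw' k2a k2b.
  have hk1 : (n.+1 - \rank (TQ y1) <= k)%N by move: g1 hk; rewrite -/y1; lia.
  have hk2 : (n.+1 - \rank (TQ y2) <= k)%N by move: g2 hk; rewrite -/y2; lia.
  have [r1 [l1 [l1p hr1 hyr1 nr1 ny1]]] := IH y1 hy1 hk1.
  have [r2 [l2 [l2p hr2 hyr2 nr2 ny2]]] := IH y2 hy2 hk2.
  pose al := t2 / (t1 + t2). pose be := t1 / (t1 + t2).
  have t12 : t1 + t2 != 0 by rewrite gt_eqF // addr_gt0.
  have alp : 0 <= al by rewrite divr_ge0 // ltW // addr_gt0.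
  have bep : 0 <= be by rewrite divr_ge0 // ltW // addr_gt0.
  have yE : y = al *: y1 + be *: y2.
    by apply/rowP => j; rewrite !mxE /al /be; field.
  have ny : n1 y <= al * n1 y1 + be * n1 y2 by rewrite {1}yE n1_comb.
  set R1 := map_mx iQ r1 in hr1 hyr1 nr1 ny1.
  set R2 := map_mx iQ r2 in hr2 hyr2 nr2 ny2.
  have K0' : 0 <= 2 ^+ k :> rat by apply: exprn_ge0.
  have nR1 := n1_ge0 R1. have nR2 := n1_ge0 R2. have ny1' := n1_ge0 y1. have ny2' := n1_ge0 y2.
  case: (lerP (be * l2 * n1 R2) (al * l1 * n1 R1)) => hc.
  + exists r1, (al * l1); split => //.
    * by rewrite mulr_ge0.
    * have -> : y - (al * l1) *: R1 = al *: (y1 - l1 *: R1) + be *: y2.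
        by apply/rowP => j; rewrite !mxE /al /be; field.
      by apply: inC_comb.
    * have e1 : al * n1 y1 <= 2 ^+ k * (al * l1 * n1 R1).
        apply: le_trans (ler_wpM2l alp ny1) _.
        by rewrite (_ : al * (2 ^+ k * l1 * n1 R1) = 2 ^+ k * (al * l1 * n1 R1)) //; ring.
      have e2 : be * n1 y2 <= 2 ^+ k * (be * l2 * n1 R2).
        apply: le_trans (ler_wpM2l bep ny2) _.
        by rewrite (_ : be * (2 ^+ k * l2 * n1 R2) = 2 ^+ k * (be * l2 * n1 R2)) //; ring.
      have e3 := ler_wpM2l K0' hc.
      rewrite (_ : 2 ^+ k.+1 * (al * l1) * n1 R1 = 2 * (2 ^+ k * (al * l1 * n1 R1))); last first.
        by rewrite exprS; ring.
      move: ny e1 e2 e3.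
      set a1 := al * n1 y1; set a2 := be * n1 y2.
      set P := 2 ^+ k * (al * l1 * n1 R1); set Q := 2 ^+ k * (be * l2 * n1 R2).
      lra.
  + exists r2, (be * l2); split => //.
    * by rewrite mulr_ge0.
    * have -> : y - (be * l2) *: R2 = al *: y1 + be *: (y2 - l2 *: R2).
        by apply/rowP => j; rewrite !mxE /al /be; field.
      by apply: inC_comb.
    * have e1 : al * n1 y1 <= 2 ^+ k * (al * l1 * n1 R1).
        apply: le_trans (ler_wpM2l alp ny1) _.
        by rewrite (_ : al * (2 ^+ k * l1 * n1 R1) = 2 ^+ k * (al * l1 * n1 R1)) //; ring.
      have e2 : be * n1 y2 <= 2 ^+ k * (be * l2 * n1 R2).
        apply: le_trans (ler_wpM2l bep ny2) _.
        by rewrite (_ : be * (2 ^+ k * l2 * n1 R2) = 2 ^+ k * (be * l2 * n1 R2)) //; ring.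
      have e3 := ler_wpM2l K0' (ltW hc).
      rewrite (_ : 2 ^+ k.+1 * (be * l2) * n1 R2 = 2 * (2 ^+ k * (be * l2 * n1 R2))); last first.
        by rewrite exprS; ring.
      move: ny e1 e2 e3.
      set a1 := al * n1 y1; set a2 := be * n1 y2.
      set P := 2 ^+ k * (al * l1 * n1 R1); set Q := 2 ^+ k * (be * l2 * n1 R2).
      lra.
Qed.

End Geo.

Lemma conf_int (p q : int) : conf (p%:~R : rat) (q%:~R) = conf p q.
Proof. by rewrite /conf !ltr0z !ler0z !ltrz0 !lerz0 intr_eq0. Qed.

Lemma atom_step (u v c : int) (s : nat) : conf v u -> conf (u - (s.+2)%:Z * v) u ->
  `|c| <= s%:Z -> (u - v == c) = (u == c) /\ (c <= u - v) = (c <= u).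
Proof.
rewrite /conf => h1 h2 hc.
have [hu|hu|hu] := ltgtP 0 u.
- move: h1 h2; rewrite hu => h1 h2.
  have [v0|vp] : v = 0 \/ 0 < v by move: h1; rewrite le_eqVlt => /orP [/eqP <-|->]; [left|right].
    by rewrite v0 subr0.
  have hh : 0 <= (s%:Z + 1) * (v - 1) by apply: mulr_ge0; lia.
  have : s%:Z < u - v by nia.
  move: hc; rewrite ler_norml => /andP [hc1 hc2] h.
  split; [apply/eqP/eqP => e | apply/idP/idP => ?]; lia.
- move: h1 h2; rewrite ltNge (ltW hu) /= hu => h1 h2.
  have [v0|vn] : v = 0 \/ v < 0 by move: h1; rewrite le_eqVlt => /orP [/eqP ->|->]; [left|right].
    by rewrite v0 subr0.
  have hh : 0 <= (s%:Z + 1) * (- v - 1) by apply: mulr_ge0; lia.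
  have : u - v < - s%:Z by nia.
  move: hc; rewrite ler_norml => /andP [hc1 hc2] h.
  split; [apply/eqP/eqP => e | apply/idP/idP => ?]; lia.
- by move: h1; rewrite -hu ltxx => /eqP ->; rewrite subr0.
Qed.

Lemma coord_step (u v : int) (s : nat) : conf v u -> conf (u - (s.+2)%:Z * v) u ->
  (`|u - v| <= `|u|)%N /\ (v != 0 -> (`|u - v| < `|u|)%N).
Proof.
rewrite /conf => h1 h2.
have [hu|hu|hu] := ltgtP 0 u.
- move: h1 h2; rewrite hu => h1 h2.
  have hh : 0 <= (s%:Z + 1) * v by apply: mulr_ge0; lia.
  have : v <= u by nia.
  move=> h; split; [|move=> /eqP v0]; lia.
- move: h1 h2; rewrite ltNge (ltW hu) /= hu => h1 h2.
  have hh : 0 <= (s%:Z + 1) * (- v) by apply: mulr_ge0; lia.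
  have : u <= v by nia.
  move=> h; split; [|move=> /eqP v0]; lia.
- by move: h1; rewrite -hu ltxx => /eqP ->; rewrite subr0 eqxx.
Qed.

Lemma atom_bound d (a : zvec d) (c : int) (s : nat) : (atom_norm a c <= s)%N ->
  (forall i, (`|a i| <= s)%N) /\ (`|c| <= s)%N.
Proof.
rewrite /atom_norm geq_max => /andP [ha hc]; split => // i.
apply: leq_trans ha; exact: (@leq_bigmax _ (fun i0 : 'I_d => `|a i0|%N) i).
Qed.

Lemma sat_same d (S : lsys d) (s : nat) (x y : zvec d) :
  (lsys_norm S <= s)%N ->
  (forall (a : zvec d) (c : int), (forall i, (`|a i| <= s)%N) -> (`|c| <= s)%N ->
     (dotz a x == c) = (dotz a y == c) /\ (c <= dotz a x) = (c <= dotz a y)) ->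
  sat S x = sat S y.
Proof.
move=> hS h; elim: S hS => [a c|a c|S1 IH|S1 IH1 S2 IH2|S1 IH1 S2 IH2] /= hS.
- by have [ha hc] := atom_bound hS; have [e _] := h a c ha hc.
- by have [ha hc] := atom_bound hS; have [_ e] := h a c ha hc.
- by rewrite IH.
- by move: hS; rewrite geq_max => /andP [h1 h2]; rewrite IH1 // IH2.
- by move: hS; rewrite geq_max => /andP [h1 h2]; rewrite IH1 // IH2.
Qed.

Lemma expn_mono (a b e : nat) : (a <= b)%N -> (a ^ e <= b ^ e)%N.
Proof. by move=> hab; elim: e => // e IH; rewrite !expnS leq_mul. Qed.

Lemma fact_le n : ((n.+1)`! <= (n.+1) ^ n)%N.
Proof.
elim: n => // n IH; rewrite factS expnS leq_mul //.
by apply: leq_trans IH _; apply: expn_mono.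
Qed.

Lemma theta_bound n s :
  (2 ^ n.+1 * s.+2 * ((n.+1)`! * s ^ n) <= (2 + n.+1 + n.+1 * s) ^ (2 * n.+1 + 1))%N.
Proof.
set N := (2 + n.+1 + n.+1 * s)%N.
have h1 : (2 ^ n.+1 <= N ^ n.+1)%N by apply: expn_mono; rewrite /N; lia.
have h2 : (s.+2 <= N)%N by rewrite /N; nia.
have h3 : ((n.+1)`! * s ^ n <= N ^ n)%N.
  apply: leq_trans (_ : (n.+1 ^ n * s ^ n <= N ^ n)%N).
    by rewrite leq_mul2r fact_le orbT.
  by rewrite -expnMn; apply: expn_mono; rewrite /N; lia.
have N1 : (0 < N)%N by rewrite /N; lia.
apply: leq_trans (_ : (N ^ n.+1 * N * N ^ n <= _)%N); first by apply: leq_mul; [apply: leq_mul|].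
have -> : (N ^ n.+1 * N * N ^ n = N ^ (2 * n.+1))%N.
  by rewrite -expnSr -expnD; congr (expn _ _); lia.
by rewrite expnD expn1 leq_pmulr.
Qed.

Lemma cv_map n m (A : 'M[int]_(m, n.+1)) i (r : 'rV[int]_n.+1) :
  cv A i (map_mx iQ r) = (\sum_j A i j * r 0 j)%:~R.
Proof. by rewrite /cv rmorph_sum; apply: eq_bigr => j _; rewrite mxE rmorphM. Qed.

Lemma sum_unit n m (A : 'M[int]_(m, n.+1)) i j :
  (forall j', A i j' = (j == j')%:R) -> forall f : 'I_n.+1 -> int, \sum_j' A i j' * f j' = f j.
Proof.
move=> hi f; rewrite (bigD1 j) //= big1 => [|k kj]; first by rewrite hi eqxx mul1r addr0.
by rewrite hi eq_sym (negbTE kj) mul0r.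
Qed.

Theorem lemma22 (d : nat) (S : lsys d) :
  (exists x : zvec d, sat S x) ->
  exists x : zvec d, sat S x /\
    (norm1 x <= (2 + d + d * lsys_norm S) ^ (2 * d + 1))%N.
Proof.
case=> x hx.
case: d S x hx => [|n] S x hx.
  by exists x; split => //; rewrite /norm1 big_ord0.
set s := lsys_norm S.
case: (posnP s) => [s0|sp].
  exists [ffun => 0]; split; last by rewrite /norm1 big1 // => i _; rewrite ffunE.
  rewrite (@sat_same _ S 0 _ x) //; first by rewrite -/s s0.
  move=> a c ha hc.
  have a0 : forall i, a i = 0 by move=> i; move: (ha i); lia.
  have -> : dotz a x = 0 by rewrite /dotz big1 // => i _; rewrite a0 mul0r.
  by have -> : dotz a [ffun=> 0] = 0 by rewrite /dotz big1 // => i _; rewrite a0 mul0r.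
pose I := {ffun 'I_n.+1 -> 'I_(2 * s).+1}.
pose A : 'M[int]_(#|{: I}|, n.+1) := \matrix_(i, j) (((enum_val i : I) j : nat)%:Z - s%:Z).
have As : forall i j, `|A i j| <= s%:Z.
  by move=> i j; rewrite mxE; case: (enum_val i j) => t ht /=; lia.
have Arep : forall a : 'I_n.+1 -> int, (forall j, (`|a j| <= s)%N) ->
    exists i, forall j, A i j = a j.
  move=> a ha; pose e : I := [ffun j => inord (absz (a j + s%:Z)%R)].
  exists (enum_rank e) => j; rewrite mxE enum_rankK ffunE inordK; move: (ha j); lia.
have Ae : forall j : 'I_n.+1, exists i, forall j', A i j' = (j == j')%:R.
  move=> j.
  have hb : forall j', (`|((j == j')%:R : int)| <= s)%N by move=> j'; case: (j == j').
  by have [i hi] := Arep (fun j' => (j == j')%:R) hb; exists i.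
pose Th := (2 ^ n.+1 * s.+2 * ((n.+1)`! * s ^ n))%N.
have desc : forall x : zvec n.+1, (Th < norm1 x)%N -> exists y : zvec n.+1,
    (forall (a : zvec n.+1) (c : int), (forall i, (`|a i| <= s)%N) -> (`|c| <= s)%N ->
      (dotz a y == c) = (dotz a x == c) /\ (c <= dotz a y) = (c <= dotz a x)) /\
    (norm1 y < norm1 x)%N.
  move=> x1 hx1.
  pose xr : 'rV[int]_n.+1 := \row_j x1 j.
  pose X := map_mx iQ xr.
  have [r [lam [l0 hr hXr nr nX]]] := key As Ae (inCx0 A X) (leq_subr (\rank (TQ A X)) n.+1).
  set R := map_mx iQ r in hr hXr nr nX.
  have nXE : n1 X = (norm1 x1)%:R.
    rewrite /n1 /norm1 natr_sum; apply: eq_bigr => j _; rewrite !mxE -intr_norm pmulrn //.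
  have Thp : (Th%:R : rat) = 2 ^+ n.+1 * (s.+2)%:R * (Rb n s)%:R by rewrite /Th /Rb !natrM natrX.
  have lbig : (s.+2)%:R <= lam.
    rewrite leNgt; apply/negP => hl.
    have : n1 X <= Th%:R.
      apply: le_trans nX _; rewrite Thp -!mulrA ler_wpM2l ?exprn_ge0 //.
      by apply: ler_pM => //; [exact: n1_ge0 | exact: ltW].
    by rewrite nXE ler_nat leqNgt hx1.
  have lp : 0 < lam by apply: lt_le_trans lbig; rewrite ltr0n.
  have hC : inC A X (X - (s.+2)%:R *: R).
    have -> : X - (s.+2)%:R *: R =
        (1 - (s.+2)%:R / lam) *: X + ((s.+2)%:R / lam) *: (X - lam *: R).
      by apply/rowP => j; rewrite !mxE; field; rewrite gt_eqF.
    apply: inC_comb; [ | by rewrite divr_ge0 // ltW | exact: inCx0 | exact: hXr].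
    by rewrite subr_ge0 ler_pdivrMr // mul1r.
  have r0 : r != 0.
    apply/negP => /eqP r0; move: nX; rewrite /R r0 map_mx0.
    have -> : n1 (0 : 'rV[rat]_n.+1) = 0 by rewrite /n1 big1 // => j _; rewrite mxE normr0.
    by rewrite mulr0 nXE lern0 => /eqP h0; rewrite h0 in hx1.
  pose y : zvec n.+1 := [ffun j => x1 j - r 0 j].
  have hatom : forall i, conf (\sum_j A i j * r 0 j) (\sum_j A i j * x1 j) /\
      conf (\sum_j A i j * x1 j - (s.+2)%:Z * \sum_j A i j * r 0 j) (\sum_j A i j * x1 j).
    move=> i; have h1 := hr i; have h2 := hC i.
    have eX : cv A i X = (\sum_j A i j * x1 j)%:~R.
      rewrite cv_map; suff -> : \sum_j A i j * xr 0 j = \sum_j A i j * x1 j by [].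
      by apply: eq_big => // j _; rewrite /xr mxE.
    rewrite /R cv_map eX conf_int in h1.
    rewrite cvB cvZ /R cv_map eX in h2.
    set u := \sum_j A i j * x1 j in h1 h2 *; set v := \sum_j A i j * r 0 j in h1 h2 *.
    have e : (u%:~R - (s.+2)%:R * v%:~R : rat) = (u - (s.+2)%:Z * v)%:~R by rewrite intrB intrM.
    by rewrite e conf_int in h2.
  exists y; split.
  - move=> a c ha hc; have [i hi] := Arep a ha.
    have ex : dotz a x1 = \sum_j A i j * x1 j by apply: eq_bigr => j _; rewrite hi.
    have ey : dotz a y = \sum_j A i j * x1 j - \sum_j A i j * r 0 j.
      by rewrite /dotz -sumrB; apply: eq_bigr => j _; rewrite hi ffunE mulrBr.
    have [h1 h2] := hatom i.
    have hc' : `|c| <= s%:Z by lia.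
    by rewrite ex ey; apply: atom_step h1 h2 hc'.
  - have hcoord : forall j, (`|y j| <= `|x1 j|)%N /\ (r 0 j != 0 -> (`|y j| < `|x1 j|)%N).
      move=> j; have [i hi] := Ae j; have [h1 h2] := hatom i.
      rewrite !(sum_unit hi) in h1 h2.
      by rewrite ffunE; apply: coord_step h1 h2.
    have [j0 hj0] : exists j, r 0 j != 0.
      apply/existsP; apply: contraR r0; rewrite negb_exists => /forallP h.
      by apply/eqP/rowP => j; rewrite mxE; apply/eqP; move: (h j); rewrite negbK.
    rewrite /norm1 (bigD1 j0) //= [X in (_ < X)%N](bigD1 j0) //=.
    have := (hcoord j0).2 hj0.
    have : (\sum_(j | j != j0) `|y j| <= \sum_(j | j != j0) `|x1 j|)%N.
      by apply: leq_sum => j _; exact: (hcoord j).1.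
    by move=> h1 h2; rewrite -addSn; apply: leq_add.
have main : forall N (x : zvec n.+1), (norm1 x <= N)%N -> sat S x ->
    exists y, sat S y /\ (norm1 y <= Th)%N.
  elim=> [|N IH] x1 hN hs1.
    by exists x1; split => //; lia.
  case: (leqP (norm1 x1) Th) => h; first by exists x1.
  have [y [hy1 hy2]] := desc x1 h.
  apply: (IH y); first by lia.
  by rewrite (@sat_same _ S s y x1).
have [y [hy1 hy2]] := main _ x (leqnn _) hx.
exists y; split => //; apply: leq_trans hy2 _; exact: theta_bound.
Qed.
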